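(* Let $(p_m)$ and $(q_n)$ belong to $SVA_{reg(\alpha)}$ (for some $\alpha\ge0$), and let $(u_{mn})$ be a double sequence of complex numbers that is $(\overline{N},p,q)$ summable to a number $\ell$. If $(u_{mn})$ is slowly oscillating relative to $(P_m)$, slowly oscillating relative to $(Q_n)$, and slowly oscillating relative to $(P_m)$ or relative to $(Q_n)$ in the strong sense, then $(u_{mn})$ is $P$-convergent to $\ell$.
   Context: Weights: $(p_m)_{m\ge0},(q_n)_{n\ge0}$ are sequences of positive reals with $P_m=\sum_{i=0}^m p_i\to\infty$ and $Q_n=\sum_{j=0}^n q_j\to\infty$. $SVA_{reg(\alpha)}$ denotes the set of positive sequences $(p_m)$ whose partial sums have the form $P_m=(m+1)^{\alpha}L(m)$ ($m\ge0$) with a constant $\alpha\ge0$ and a slowly varying function $L$ on $(0,\infty)$, i.e. $L$ positive, measurable, and $L(\lambda t)/L(t)\to1$ as $t\to\infty$ for every $\lambda>0$. The weighted means are $\sigma_{mn}=\frac{1}{P_mQ_n}\sum_{i=0}^m\sum_{j=0}^n p_iq_ju_{ij}$; $(u_{mn})$ is $(\overline{N},p,q)$ summable to $\ell$ if $(\sigma_{mn})$ is $P$-convergent to $\ell$. A double sequence $(a_{mn})$ is $P$-convergent to $\ell$ if for every $\epsilon>0$ there is $n_0$ with $|a_{mn}-\ell|<\epsilon$ whenever $m,n\ge n_0$. For a real double array $(a_{mn})$, $\limsup_{m,n\to\infty}a_{mn}=\lim_{N\to\infty}\sup_{m,n\ge N}a_{mn}$. In the maxima below, $i,j$ range over nonnegative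 integers satisfying the constraints. A complex double sequence $(u_{mn})$ is: - slowly oscillating relative to $(P_m)$ if $\lim_{\lambda\to1^+}\limsup_{m,n\to\infty}\max_{P_m\le P_i\le\lambda P_m}|u_{in}-u_{mn}|=0$; - slowly oscillating relative to $(Q_n)$ if $\lim_{\kappa\to1^+}\limsup_{m,n\to\infty}\max_{Q_n\le Q_j\le\kappa Q_n}|u_{mj}-u_{mn}|=0$; - slowly oscillating relative to $(P_m)$ in the strong sense if $\lim_{\lambda,\kappa\to1^+}\limsup_{m,n\to\infty}\max_{P_m\le P_i\le\lambda P_m,\ Q_n\le Q_j\le\kappa Q_n}|u_{ij}-u_{mj}|=0$; - slowly oscillating relative to $(Q_n)$ in the strong sense if $\lim_{\lambda,\kappa\to1^+}\limsup_{m,n\to\infty}\max_{P_m\le P_i\le\lambda P_m,\ Q_n\le Q_j\le\kappa Q_n}|u_{ij}-u_{in}|=0$. *)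

(* Defs.v *)
From HB Require Import structures.
From mathcomp Require Import all_boot all_order all_algebra.
From mathcomp Require Import all_classical all_reals all_analysis.
From mathcomp Require Import complex.
Set Implicit Arguments. Unset Strict Implicit. Unset Printing Implicit Defensive.
Import Order.TTheory GRing.Theory Num.Theory.
Import numFieldNormedType.Exports.
Local Open Scope classical_set_scope.
Local Open Scope ring_scope.


Section Defs.
Variable R : realType.

Definition cabs (z : R[i]) : R := ComplexField.Normc.normc z.

Definition psum (p : nat -> R) (m : nat) : R := \sum_(i < m.+1) p i.

Definition slowly_varying (L : R -> R) : Prop :=
  [/\ (forall t : R, 0 < t -> 0 < L t),
      measurable_fun (`]0, +oo[%classic : set R) L &
      forall lam : R, 0 < lam -> (L (lam * t) / L t) @[t --> +oo] --> (1 : R)].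

Definition SVA_reg (alpha : R) (p : nat -> R) : Prop :=
  (forall m, 0 < p m) /\
  exists L : R -> R, slowly_varying L /\
    forall m : nat, psum p m = (m%:R + 1) `^ alpha * L m%:R.

Definition wmean (p q : nat -> R) (u : nat -> nat -> R[i]) (m n : nat) : R[i] :=
  ((psum p m * psum q n)^-1)%:C%C *
    \sum_(i < m.+1) \sum_(j < n.+1) ((p i * q j)%:C%C * u i j).

Definition Pconv (a : nat -> nat -> R[i]) (l : R[i]) : Prop :=
  forall eps : R, 0 < eps -> exists n0 : nat,
    forall m n : nat, (n0 <= m)%N -> (n0 <= n)%N -> cabs (a m n - l) < eps.

Definition NPQ_summable (p q : nat -> R) (u : nat -> nat -> R[i]) (l : R[i]) :=
  Pconv (wmean p q u) l.

Definition dlimsup (a : nat -> nat -> \bar R) : \bar R :=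
  limn (fun N : nat =>
    ereal_sup [set x | exists m n : nat, [/\ (N <= m)%N, (N <= n)%N & x = a m n]]).

Definition oscP (p : nat -> R) (u : nat -> nat -> R[i]) (lam : R) (m n : nat) : \bar R :=
  ereal_sup [set x | exists i : nat,
    [/\ psum p m <= psum p i, psum p i <= lam * psum p m & x = (cabs (u i n - u m n))%:E]].

Definition oscQ (q : nat -> R) (u : nat -> nat -> R[i]) (kap : R) (m n : nat) : \bar R :=
  ereal_sup [set x | exists j : nat,
    [/\ psum q n <= psum q j, psum q j <= kap * psum q n & x = (cabs (u m j - u m n))%:E]].

Definition slowly_osc_P (p : nat -> R) (u : nat -> nat -> R[i]) : Prop :=
  dlimsup (oscP p u lam) @[lam --> 1^'+] --> 0%E.

Definition slowly_osc_Q (q : nat -> R) (u : nat -> nat -> R[i]) : Prop :=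
  dlimsup (oscQ q u kap) @[kap --> 1^'+] --> 0%E.

Definition oscP_strong (p q : nat -> R) (u : nat -> nat -> R[i]) (lam kap : R)
  (m n : nat) : \bar R :=
  ereal_sup [set x | exists i j : nat,
    [/\ psum p m <= psum p i <= lam * psum p m,
        psum q n <= psum q j <= kap * psum q n
      & x = (cabs (u i j - u m j))%:E]].

Definition oscQ_strong (p q : nat -> R) (u : nat -> nat -> R[i]) (lam kap : R)
  (m n : nat) : \bar R :=
  ereal_sup [set x | exists i j : nat,
    [/\ psum p m <= psum p i <= lam * psum p m,
        psum q n <= psum q j <= kap * psum q n
      & x = (cabs (u i j - u i n))%:E]].

Definition slowly_osc_P_strong (p q : nat -> R) (u : nat -> nat -> R[i]) : Prop :=
  (fun lk : R * R => dlimsup (oscP_strong p q u lk.1 lk.2))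
    @ filter_prod (1^'+) (1^'+) --> 0%E.

Definition slowly_osc_Q_strong (p q : nat -> R) (u : nat -> nat -> R[i]) : Prop :=
  (fun lk : R * R => dlimsup (oscQ_strong p q u lk.1 lk.2))
    @ filter_prod (1^'+) (1^'+) --> 0%E.

End Defs.

(* Main.v *)
Require Import Defs.
From HB Require Import structures.
From mathcomp Require Import all_boot all_order all_algebra.
From mathcomp Require Import all_classical all_reals all_analysis.
From mathcomp Require Import complex.
From mathcomp Require Import ring lra.
Import Order.TTheory GRing.Theory Num.Theory.
Import numFieldNormedType.Exports.
Local Open Scope classical_set_scope.
Local Open Scope ring_scope.

Section Basic.
Variable R : realType.

Lemma cabsD (x y : R[i]) : cabs (x + y) <= cabs x + cabs y.
Proof. exact: (@le_normcD R x y). Qed.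

Lemma cabsN (x : R[i]) : cabs (- x) = cabs x.
Proof. exact: (@normcN R x). Qed.

Lemma cabs0 : cabs (0 : R[i]) = 0.
Proof. exact: ComplexField.Normc.normc0. Qed.

Lemma cabs_ge0 (x : R[i]) : 0 <= cabs x.
Proof. by case: x => a b; rewrite /cabs /= sqrtr_ge0. Qed.

Lemma cabsB (x y : R[i]) : cabs (x - y) = cabs (y - x).
Proof. by rewrite -cabsN opprB. Qed.

Lemma cabs_real (c : R) : cabs (c%:C)%C = `|c|.
Proof. by rewrite /cabs /= expr0n /= addr0 sqrtr_sqr. Qed.

Lemma cabsM (x y : R[i]) : cabs (x * y) = cabs x * cabs y.
Proof. exact: ComplexField.Normc.normcM. Qed.

Lemma cabs_sum (I : Type) (r : seq I) (F : I -> R[i]) :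
  cabs (\sum_(i <- r) F i) <= \sum_(i <- r) cabs (F i).
Proof.
elim: r => [|a r IH]; first by rewrite !big_nil cabs0.
rewrite !big_cons; apply: le_trans (cabsD _ _) _; exact: lerD.
Qed.

Variable p : nat -> R.
Hypothesis hp : forall m, 0 < p m.

Lemma psumS m : psum p m.+1 = psum p m + p m.+1.
Proof. by rewrite /psum big_ord_recr. Qed.

Lemma psum_gt0 m : 0 < psum p m.
Proof. elim: m => [|m IH]; first by rewrite /psum big_ord1.
by rewrite psumS addr_gt0. Qed.

Lemma psum_le m n : (m <= n)%N -> psum p m <= psum p n.
Proof.
move=> /subnK <-; elim: (n - m)%N => [|k IH]; first by rewrite add0n.
by rewrite addSn psumS (le_trans IH) // lerDl ltW.
Qed.

Lemma psum_lt m n : (m < n)%N -> psum p m < psum p n.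
Proof. move=> h; apply: (@lt_le_trans _ _ (psum p m.+1)); last exact: psum_le.
by rewrite psumS ltrDl. Qed.

End Basic.
Arguments psum_le {R p} hp {m n}.
Arguments psum_gt0 {R p} hp m.
Arguments psum_lt {R p} hp {m n}.

Lemma final_ineq (R : realType) (lam kap A a B b x e : R) :
  1 < lam -> 1 < kap -> 0 < A -> 0 < B -> 0 < e -> 0 <= x ->
  (lam + 1) * A <= 2 * a -> a <= lam * A ->
  (kap + 1) * B <= 2 * b -> b <= kap * B ->
  (a - A) * (b - B) * x <=
    e * (lam - 1) * (kap - 1) / (16 * (lam + 1) * (kap + 1)) *
      (a * b + A * b + a * B + A * B) + (a - A) * (b - B) * (e / 2) ->
  x < e.
Proof.
move=> l1 k1 A0 B0 e0 x0 ha1 ha2 hb1 hb2 H.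
set ep := e * (lam - 1) * (kap - 1) / (16 * (lam + 1) * (kap + 1)) in H.
have ep0 : 0 <= ep.
  rewrite /ep; apply: divr_ge0; last by apply: mulr_ge0; lra.
  by apply: mulr_ge0; [apply: mulr_ge0|]; lra.
have hu : (lam - 1) * A <= 2 * (a - A) by lra.
have hv : (kap - 1) * B <= 2 * (b - B) by lra.
have huv : ((lam - 1) * A) * ((kap - 1) * B) <= (2 * (a - A)) * (2 * (b - B)).
  apply: ler_pM => //; apply: mulr_ge0; lra.
have hab : (a + A) * (b + B) <= ((lam + 1) * A) * ((kap + 1) * B).
  apply: ler_pM; lra.
have E : ep * (((lam + 1) * A) * ((kap + 1) * B)) =
    e * (((lam - 1) * A) * ((kap - 1) * B)) / 16.
  rewrite /ep; field; apply/andP; split; lra.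
have h1 : ep * (a * b + A * b + a * B + A * B) <= e * ((a - A) * (b - B)) / 4.
  have -> : a * b + A * b + a * B + A * B = (a + A) * (b + B) by ring.
  apply: le_trans (ler_wpM2l ep0 hab) _; rewrite E.
  have := ler_wpM2l (ltW e0) huv; lra.
have hu0 : 0 < (lam - 1) * A by apply: mulr_gt0; lra.
have hv0 : 0 < (kap - 1) * B by apply: mulr_gt0; lra.
have uv0 : 0 < (a - A) * (b - B) by apply: mulr_gt0; lra.
have h2 : (a - A) * (b - B) * x <= (a - A) * (b - B) * (3 * e / 4).
  apply: le_trans H _.
  have -> : (a - A) * (b - B) * (3 * e / 4) = e * ((a - A) * (b - B)) / 4 + (a - A) * (b - B) * (e / 2) by field.
  by rewrite lerD2r.
rewrite ler_pM2l // in h2; lra.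
Qed.

Lemma bracket (R : realType) (r : nat -> R) (hr : forall m, 0 < r m)
  (unb : forall T, exists j, T < psum r j) m T : psum r m <= T ->
  exists k, [/\ (m <= k)%N, psum r k <= T & T < psum r k.+1].
Proof.
move=> hmT.
have exP : exists j, (fun j => T < psum r j) j by exact: unb.
case: (@ex_minnP (fun j => T < psum r j) exP) => j hj hmin.
case: j hj hmin => [|k] hj hmin.
  have := le_lt_trans (le_trans (psum_le hr (leq0n m)) hmT) hj.
  by rewrite ltxx.
exists k; split => //.
- rewrite leqNgt; apply/negP => hkm.
  have := le_lt_trans (le_trans (psum_le hr hkm) hmT) hj.
  by rewrite ltxx.
- rewrite leNgt; apply/negP => /hmin; by rewrite ltnn.
Qed.

Section Core.
Variable R : realType.
Variables (p q : nat -> R) (u : nat -> nat -> R[i]) (l : R[i]).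
Hypotheses (hp : forall m, 0 < p m) (hq : forall n, 0 < q n).

Let f i j := (p i * q j)%:C%C * (u i j - l).
Let T a b := \sum_(0 <= i < a.+1) \sum_(0 <= j < b.+1) f i j.

Lemma psum_nat (r : nat -> R) a : psum r a = \sum_(0 <= i < a.+1) r i.
Proof. by rewrite /psum big_mkord. Qed.

Lemma T_wmean a b :
  T a b = (psum p a * psum q b)%:C%C * (wmean p q u a b - l).
Proof.
have PQ0 : psum p a * psum q b != 0.
  by rewrite mulf_neq0 // gt_eqF // psum_gt0.
rewrite /wmean mulrBr mulrA -rmorphM mulfV // rmorph1 mul1r.
rewrite /T /f.
have -> : (psum p a * psum q b)%:C%C * l =
   \sum_(0 <= i < a.+1) \sum_(0 <= j < b.+1) (p i * q j)%:C%C * l.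
  rewrite !psum_nat mulr_suml rmorph_sum mulr_suml; apply: eq_bigr => i _.
  rewrite mulr_sumr rmorph_sum mulr_suml; apply: eq_bigr => j _ //.
rewrite [in RHS]big_mkord -sumrB big_mkord; apply: eq_bigr => i _.
rewrite [in RHS]big_mkord -sumrB big_mkord; apply: eq_bigr => j _.
by rewrite mulrBr.
Qed.

Lemma psum_diff (r : nat -> R) m k : (m <= k)%N ->
  psum r k - psum r m = \sum_(m.+1 <= i < k.+1) r i.
Proof.
move=> hmk; rewrite !psum_nat (@big_cat_nat _ _ _ m.+1 0 k.+1) //.
by rewrite addrC addKr.
Qed.

Lemma T_block m k n k2 : (m <= k)%N -> (n <= k2)%N ->
  T k k2 - T m k2 - T k n + T m n =
  \sum_(m.+1 <= i < k.+1) \sum_(n.+1 <= j < k2.+1) f i j.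
Proof.
move=> hmk hnl; rewrite /T.
set G := fun b i => \sum_(0 <= j < b.+1) f i j.
have E b : \sum_(0 <= i < k.+1) G b i =
   \sum_(0 <= i < m.+1) G b i + \sum_(m.+1 <= i < k.+1) G b i.
  by rewrite (@big_cat_nat _ _ _ m.+1 0 k.+1).
rewrite -/(G k2) -/(G n).
have -> : \sum_(0 <= i < k.+1) G k2 i = \sum_(0 <= i < k.+1) G k2 i by [].
rewrite (E k2) (E n).
have -> : forall A X C Y : R[i], (A + X) - A - (C + Y) + C = X - Y.
  by move=> *; ring.
rewrite -sumrB; apply: eq_bigr => i _; rewrite /G.
rewrite (@big_cat_nat _ _ _ n.+1 0 k2.+1) //=.
by rewrite addrC addrK.
Qed.

Lemma block_diff m k n k2 :
  \sum_(m.+1 <= i < k.+1) \sum_(n.+1 <= j < k2.+1) f i j -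
  (\sum_(m.+1 <= i < k.+1) \sum_(n.+1 <= j < k2.+1) (p i * q j))%:C%C * (u m n - l)
  = \sum_(m.+1 <= i < k.+1) \sum_(n.+1 <= j < k2.+1)
      (p i * q j)%:C%C * (u i j - u m n).
Proof.
rewrite rmorph_sum mulr_suml -sumrB; apply: eq_bigr => i _.
rewrite rmorph_sum mulr_suml -sumrB; apply: eq_bigr => j _.
rewrite /f -mulrBr; congr (_ * _); ring.
Qed.

Lemma block_D m k n k2 : (m <= k)%N -> (n <= k2)%N ->
  \sum_(m.+1 <= i < k.+1) \sum_(n.+1 <= j < k2.+1) (p i * q j) =
  (psum p k - psum p m) * (psum q k2 - psum q n).
Proof.
move=> h1 h2; rewrite !psum_diff // mulr_suml; apply: eq_bigr => i _.
by rewrite mulr_sumr.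
Qed.

Lemma block_bound m k n k2 (d : R) :
  (forall i j, (m < i <= k)%N -> (n < j <= k2)%N -> cabs (u i j - u m n) <= d) ->
  cabs (\sum_(m.+1 <= i < k.+1) \sum_(n.+1 <= j < k2.+1)
      (p i * q j)%:C%C * (u i j - u m n)) <=
  (\sum_(m.+1 <= i < k.+1) \sum_(n.+1 <= j < k2.+1) (p i * q j)) * d.
Proof.
move=> H; apply: le_trans (cabs_sum _ _ _ _) _.
rewrite mulr_suml; apply: ler_sum_nat => i /andP[hi1 hi2].
apply: le_trans (cabs_sum _ _ _ _) _.
rewrite mulr_suml; apply: ler_sum_nat => j /andP[hj1 hj2].
have pq0 : 0 <= p i * q j by rewrite mulr_ge0 // ltW.
rewrite cabsM cabs_real ger0_norm //.
by apply: ler_wpM2l => //; apply: H; apply/andP; split.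
Qed.

Lemma core :
  (forall e, 0 < e -> exists n0, forall a b, (n0 <= a)%N -> (n0 <= b)%N ->
     cabs (wmean p q u a b - l) < e) ->
  (forall r, 1 < r -> exists N, forall i, (N <= i)%N -> psum p i.+1 <= r * psum p i) ->
  (forall r, 1 < r -> exists N, forall i, (N <= i)%N -> psum q i.+1 <= r * psum q i) ->
  (forall T, exists j, T < psum p j) -> (forall T, exists j, T < psum q j) ->
  (forall d, 0 < d -> exists lam kap N, [/\ 1 < lam, 1 < kap &
     forall m n i j, (N <= m)%N -> (N <= n)%N ->
       psum p m <= psum p i <= lam * psum p m ->
       psum q n <= psum q j <= kap * psum q n ->
       cabs (u i j - u m n) <= d]) ->
  Pconv u l.
Proof.
move=> Hs Hrp Hrq Hup Huq Ho e e0.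
have e20 : 0 < e / 2 by rewrite divr_gt0.
have [lam [kap [N [lam1 kap1 HN]]]] := Ho (e / 2) e20.
pose rp := 2 * lam / (lam + 1).
have rp1 : 1 < rp by rewrite /rp ltr_pdivlMr; lra.
pose rq := 2 * kap / (kap + 1).
have rq1 : 1 < rq by rewrite /rq ltr_pdivlMr; lra.
have [N1 HN1] := Hrp rp rp1.
have [N2 HN2] := Hrq rq rq1.
pose ep := e * (lam - 1) * (kap - 1) / (16 * (lam + 1) * (kap + 1)).
have ep0 : 0 < ep.
  rewrite /ep; apply: divr_gt0; last by apply: mulr_gt0; lra.
  by apply: mulr_gt0; [apply: mulr_gt0|]; lra.
have [n0 Hn0] := Hs ep ep0.
exists (maxn N (maxn N1 (maxn N2 n0))) => m n hm hn.
rewrite !geq_max in hm hn.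
case/and4P: hm => hmN hmN1 hmN2 hmn0.
case/and4P: hn => hnN hnN1 hnN2 hnn0.
have A0 := psum_gt0 hp m.
have B0 := psum_gt0 hq n.
have [k [hmk hk1 hk2]] := @bracket R p hp Hup m (lam * psum p m)
   (ler_peMl (ltW A0) (ltW lam1)).
have [k2 [hnk hk21 hk22]] := @bracket R q hq Huq n (kap * psum q n)
   (ler_peMl (ltW B0) (ltW kap1)).
have ha1 : (lam + 1) * psum p m <= 2 * psum p k.
  have h := HN1 k (leq_trans hmN1 hmk).
  have : lam * psum p m < rp * psum p k by apply: lt_le_trans h.
  rewrite /rp mulrAC ltr_pdivlMr; last lra.
  move=> h'; rewrite -(ler_pM2l (lt_trans ltr01 lam1)); apply: ltW.
  have -> : lam * ((lam + 1) * psum p m) = lam * psum p m * (lam + 1) by ring.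
  have -> : lam * (2 * psum p k) = 2 * lam * psum p k by ring.
  exact: h'.
have hb1 : (kap + 1) * psum q n <= 2 * psum q k2.
  have h := HN2 k2 (leq_trans hnN2 hnk).
  have : kap * psum q n < rq * psum q k2 by apply: lt_le_trans h.
  rewrite /rq mulrAC ltr_pdivlMr; last lra.
  move=> h'; rewrite -(ler_pM2l (lt_trans ltr01 kap1)); apply: ltW.
  have -> : kap * ((kap + 1) * psum q n) = kap * psum q n * (kap + 1) by ring.
  have -> : kap * (2 * psum q k2) = 2 * kap * psum q k2 by ring.
  exact: h'.
apply: (@final_ineq R lam kap (psum p m) (psum p k) (psum q n) (psum q k2)
  (cabs (u m n - l)) e lam1 kap1 A0 B0 e0 (cabs_ge0 _ _) ha1 hk1 hb1 hk21).
rewrite -(block_D _ _ _ _ hmk hnk).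
set D := \sum_(m.+1 <= i < k.+1) \sum_(n.+1 <= j < k2.+1) (p i * q j).
have D0 : 0 <= D by rewrite /D (block_D _ _ _ _ hmk hnk) mulr_ge0 // subr_ge0 psum_le.
have -> : D * cabs (u m n - l) = cabs (D%:C%C * (u m n - l)).
  by rewrite cabsM cabs_real ger0_norm.
have -> : D%:C%C * (u m n - l) =
  \sum_(m.+1 <= i < k.+1) \sum_(n.+1 <= j < k2.+1) f i j -
  (\sum_(m.+1 <= i < k.+1) \sum_(n.+1 <= j < k2.+1) f i j - D%:C%C * (u m n - l)).
  by rewrite opprB addrCA subrr addr0.
rewrite block_diff -(T_block _ _ _ _ hmk hnk).
have hT a b : (n0 <= a)%N -> (n0 <= b)%N -> cabs (T a b) <= psum p a * psum q b * ep.
  move=> ha hb; rewrite T_wmean cabsM cabs_real ger0_norm; last first.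
    by rewrite mulr_ge0 // ltW // psum_gt0.
  by apply: ler_wpM2l; [rewrite mulr_ge0 // ltW // psum_gt0 | apply: ltW; apply: Hn0].
have hB := @block_bound m k n k2 (e / 2).
have tri : forall a b c d x : R[i],
    cabs (a - b - c + d - x) <= cabs a + cabs b + cabs c + cabs d + cabs x.
  move=> a b c d x.
  apply: (le_trans (cabsD _ _ _)); rewrite cabsN lerD2r.
  apply: (le_trans (cabsD _ _ _)); rewrite lerD2r.
  apply: (le_trans (cabsD _ _ _)); rewrite cabsN lerD2r.
  apply: (le_trans (cabsD _ _ _)); by rewrite cabsN.
apply: (le_trans (tri _ _ _ _ _)).
have h1 := hT k k2 (leq_trans hmn0 hmk) (leq_trans hnn0 hnk).
have h2 := hT m k2 hmn0 (leq_trans hnn0 hnk).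
have h3 := hT k n (leq_trans hmn0 hmk) hnn0.
have h4 := hT m n hmn0 hnn0.
have h5 : cabs (\sum_(m.+1 <= i < k.+1) \sum_(n.+1 <= j < k2.+1)
      (p i * q j)%:C%C * (u i j - u m n)) <= D * (e / 2).
  apply: hB => i j /andP[hi1 hi2] /andP[hj1 hj2].
  apply: HN => //; [apply/andP; split|apply/andP; split].
  - by apply: (psum_le hp); apply: ltnW.
  - by apply: le_trans hk1; apply: (psum_le hp).
  - by apply: (psum_le hq); apply: ltnW.
  - by apply: le_trans hk21; apply: (psum_le hq).
rewrite -/ep.
lra.
Qed.

End Core.

Lemma dlimsup_lt (R : realType) (a : nat -> nat -> \bar R) (x : R) :
  (dlimsup a < x%:E)%E ->
  exists N, forall m n, (N <= m)%N -> (N <= n)%N -> (a m n < x%:E)%E.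
Proof.
rewrite /dlimsup.
set s := fun N : nat => ereal_sup [set y | exists m n : nat,
   [/\ (N <= m)%N, (N <= n)%N & y = a m n]].
have hs : {homo s : n m / (n <= m)%N >-> (m <= n)%E}.
  move=> N M hNM; apply: ereal_sup_le => y [m [n [h1 h2 ->]]].
  by exists m, n; split => //; apply: leq_trans h1 h2 || apply: leq_trans hNM _.
rewrite (cvg_lim (@ereal_hausdorff R) (ereal_nonincreasing_cvgn hs)).
move=> /ereal_inf_lt [y [N _ <-]] hN.
exists N => m n hm hn; apply: le_lt_trans hN.
by apply: ereal_sup_ubound; exists m, n.
Qed.
Arguments dlimsup_lt {R a x}.

Lemma near_osc (R : realType) (f : R -> \bar R) (d : R) : 0 < d ->
  f x @[x --> 1^'+] --> 0%E -> \forall x \near 1^'+, (f x < d%:E)%E.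
Proof.
move=> d0 H.
exact: (H _ (@nbhs_open_ereal_lt R 0 (fun=> d) d0)).
Qed.
Arguments near_osc {R f d}.

Lemma near_prod_osc (R : realType) (f : R * R -> \bar R) (d : R) : 0 < d ->
  f @ filter_prod (1^'+) (1^'+) --> 0%E ->
  exists A B, [/\ (\forall x \near 1^'+, A x), (\forall x \near 1^'+, B x) &
    forall x y, A x -> B y -> (f (x, y) < d%:E)%E].
Proof.
move=> d0 H.
have := H _ (@nbhs_open_ereal_lt R 0 (fun=> d) d0).
case => -[A B] /= [hA hB] hAB.
exists A, B; split => // x y hx hy.
by apply: (hAB (x, y)).
Qed.
Arguments near_prod_osc {R f d}.

Lemma osc_Ho (R : realType) (p q : nat -> R) (u : nat -> nat -> R[i]) :
  slowly_osc_P p u -> slowly_osc_Q q u ->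
  slowly_osc_P_strong p q u \/ slowly_osc_Q_strong p q u ->
  (forall d, 0 < d -> exists lam kap N, [/\ 1 < lam, 1 < kap &
     forall m n i j, (N <= m)%N -> (N <= n)%N ->
       psum p m <= psum p i <= lam * psum p m ->
       psum q n <= psum q j <= kap * psum q n ->
       cabs (u i j - u m n) <= d]).
Proof.
move=> HP HQ HS d d0.
have d20 : 0 < d / 2 by rewrite divr_gt0.
have nP := near_osc d20 HP.
have nQ := near_osc d20 HQ.
have tri : forall x y z : R[i], cabs (x - y) <= cabs (x - z) + cabs (z - y).
  move=> x y z; have -> : x - y = (x - z) + (z - y) by ring.
  exact: cabsD.
case: HS => HS.
- have [A [B [hA hB hAB]]] := near_prod_osc d20 HS.
  have [lam [[l1 lA] _]] := filter_ex (filterI (filterI (nbhs_right_gt 1) hA) nP).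
  have [kap [[k1 kB] kQ]] := filter_ex (filterI (filterI (nbhs_right_gt 1) hB) nQ).
  have [N1 HN1] := dlimsup_lt (hAB _ _ lA kB).
  have [N2 HN2] := dlimsup_lt kQ.
  exists lam, kap, (maxn N1 N2); split => // m n i j.
  rewrite !geq_max => /andP[m1 m2] /andP[n1 n2] hi hj.
  apply: le_trans (tri _ _ (u m j)) _.
  have h1 : ((cabs (u i j - u m j))%:E < (d / 2)%:E)%E.
    apply: le_lt_trans (HN1 m n m1 n1).
    by apply: ereal_sup_ubound; exists i, j.
  have h2 : ((cabs (u m j - u m n))%:E < (d / 2)%:E)%E.
    apply: le_lt_trans (HN2 m n m2 n2).
    by apply: ereal_sup_ubound; exists j; case/andP: hj => ? ?.
  rewrite !lte_fin in h1 h2; lra.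
- have [A [B [hA hB hAB]]] := near_prod_osc d20 HS.
  have [lam [[l1 lA] lP]] := filter_ex (filterI (filterI (nbhs_right_gt 1) hA) nP).
  have [kap [[k1 kB] _]] := filter_ex (filterI (filterI (nbhs_right_gt 1) hB) nQ).
  have [N1 HN1] := dlimsup_lt (hAB _ _ lA kB).
  have [N2 HN2] := dlimsup_lt lP.
  exists lam, kap, (maxn N1 N2); split => // m n i j.
  rewrite !geq_max => /andP[m1 m2] /andP[n1 n2] hi hj.
  apply: le_trans (tri _ _ (u i n)) _.
  have h1 : ((cabs (u i j - u i n))%:E < (d / 2)%:E)%E.
    apply: le_lt_trans (HN1 m n m1 n1).
    by apply: ereal_sup_ubound; exists i, j.
  have h2 : ((cabs (u i n - u m n))%:E < (d / 2)%:E)%E.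
    apply: le_lt_trans (HN2 m n m2 n2).
    by apply: ereal_sup_ubound; exists i; case/andP: hi => ? ?.
  rewrite !lte_fin in h1 h2; lra.
Qed.

Lemma sva_ratio (R : realType) (alpha : R) (p : nat -> R) :
  0 <= alpha -> SVA_reg alpha p ->
  forall r, 1 < r -> exists N, forall i, (N <= i)%N -> psum p i.+1 <= r * psum p i.
Proof.
move=> a0 [hp [L [[Lpos _ Llim] HL]]] r r1.
set s := Num.sqrt r.
have s1 : 1 < s by rewrite /s -{1}sqrtr1 ltr_sqrt //; lra.
have ss : s * s = r by rewrite /s -expr2 sqr_sqrtr //; lra.
have lns0 : 0 < ln s by apply: ln_gt0.
set K := (Num.Def.archi_bound (alpha / ln s)).+1.
have K0 : (0 < K)%N by [].
have K0R : 0 < K%:R :> R by rewrite ltr0n.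
have hK : alpha / K%:R <= ln s.
  have h := @archi_boundP R (alpha / ln s) (divr_ge0 a0 (ltW lns0)).
  have h' : alpha / ln s <= K%:R.
    apply: ltW; apply: lt_le_trans h _; rewrite ler_nat /K; exact: leqnSn.
  by rewrite ler_pdivrMr // [_ * K%:R]mulrC -ler_pdivrMr.
pose lam : R := K.+1%:R / K%:R.
have lam0 : 0 < lam by rewrite divr_gt0 // ltr0n.
have lam1 : lam - 1 = K%:R^-1.
  by rewrite /lam -addn1 natrD; field; rewrite gt_eqF.
have hlam : lam `^ alpha <= s.
  rewrite /powR gt_eqF //.
  rewrite -(lnK (x := s)); last by rewrite posrE; lra.
  rewrite ler_expR.
  have : ln lam <= K%:R^-1.
    have -> : lam = 1 + (lam - 1) by ring.
    rewrite lam1; apply: le_ln1Dx.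
    have : 0 < K%:R^-1 :> R by rewrite invr_gt0.
    lra.
  move=> h; apply: le_trans hK; rewrite ler_wpM2l //.
have [M [Mr HM]] := @cvgr_lt R R _ _ _ 1 (Llim lam lam0) s s1.
pose J := Num.Def.archi_bound `|M|.
have MJ : M < J%:R.
  exact: le_lt_trans (real_ler_norm Mr) (archi_boundP (normr_ge0 M)).
have r0 : 0 < r by lra.
exists (K * (J + K))%N => n hn.
set j := (n %/ K)%N.
have hj1 : (K * j <= n)%N by rewrite mulnC leq_divM.
have hj2 : (n < j.+1 * K)%N := ltn_ceil n K0.
have hj3 : (J + K <= j)%N by have := leq_div2r K hn; rewrite mulKn.
have hKj : (K <= j)%N by apply: leq_trans hj3; rewrite leq_addl.
have hn1 : (n.+1 <= K.+1 * j)%N.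
  rewrite mulSn mulnC addnC; apply: leq_trans hj2 _; rewrite mulSn addnC.
  by rewrite leq_add2l.
apply: (le_trans (psum_le hp hn1)).
apply: (le_trans _ (ler_wpM2l (ltW r0) (psum_le hp hj1))).
rewrite !HL.
set t := (K * j)%:R : R.
have hJt : (J <= K * j)%N.
  apply: leq_trans (leq_pmull _ K0); apply: leq_trans hj3; exact: leq_addr.
have tM : M < t by apply: lt_le_trans MJ _; rewrite /t ler_nat.
have t0 : 0 < t by rewrite /t ltr0n muln_gt0 K0 (leq_trans K0 hKj).
have E1 : (K.+1 * j)%:R = lam * t :> R.
  by rewrite /lam /t !natrM; field; rewrite gt_eqF.
rewrite E1.
have hL : L (lam * t) <= s * L t.
  have := HM t tM; rewrite ltr_pdivrMr; last exact: Lpos.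
  by move/ltW; rewrite mulrC.
have lam_ge1 : 1 <= lam.
  have : 0 <= lam - 1 by rewrite lam1 invr_ge0 ltW.
  lra.
have hpow : (lam * t + 1) `^ alpha <= s * (t + 1) `^ alpha.
  apply: (@le_trans _ _ ((lam * (t + 1)) `^ alpha)).
    apply: ge0_ler_powR => //; rewrite ?nnegrE; try nra.
  rewrite powRM; try nra.
  by apply: ler_wpM2r => //; apply: powR_ge0.
have Lt0 := Lpos (lam * t) (mulr_gt0 lam0 t0).
apply: (@le_trans _ _ ((s * (t + 1) `^ alpha) * (s * L t))).
  by apply: ler_pM => //; [apply: powR_ge0 | apply: ltW].
rewrite -ss; lra.
Qed.

Lemma unb_of (R : realType) (r : nat -> R) :
  psum r n @[n --> \oo] --> +oo -> forall T, exists j, T < psum r j.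
Proof.
move=> /cvgryPge H T.
have [j hj] := filter_ex (H (T + 1)).
by exists j; apply: lt_le_trans hj; rewrite ltrDl.
Qed.

Theorem theorem5p1 (R : realType) (alpha : R) (p q : nat -> R)
    (u : nat -> nat -> R[i]) (l : R[i]) :
  0 <= alpha ->
  (forall m, 0 < p m) -> (forall n, 0 < q n) ->
  psum p n @[n --> \oo] --> +oo ->
  psum q n @[n --> \oo] --> +oo ->
  SVA_reg alpha p -> SVA_reg alpha q ->
  NPQ_summable p q u l ->
  slowly_osc_P p u -> slowly_osc_Q q u ->
  slowly_osc_P_strong p q u \/ slowly_osc_Q_strong p q u ->
  Pconv u l.
Proof.
move=> a0 hp hq cp cq sp sq hs oP oQ oS.
apply: (@core R p q u l hp hq).
- exact: hs.
- exact: (@sva_ratio R alpha p a0 sp).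
- exact: (@sva_ratio R alpha q a0 sq).
- exact: unb_of.
- exact: unb_of.
- exact: (@osc_Ho R p q u oP oQ oS).
Qed.
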